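(* Let $(X,d)$ be a proper geodesic metric space with a distinguished base point $0$, and let $(x_n)$ and $(y_n)$ be sequences in $X$ which both converge to the same point $\omega\in\partial_d X$ of the metric boundary. Then $\lim_{n\to\infty}(x_n\cdot y_n)=\infty$.
   Context: A metric space is proper if closed bounded sets are compact, and geodesic if any two points $x,y$ are joined by an isometric image of $[0,d(x,y)]$. The Gromov product with respect to the base point $0$ is $(x\cdot y)=\tfrac12\big(d(x,0)+d(y,0)-d(x,y)\big)$. For $y\in X$ let $\varphi_y(x)=d(x,0)-d(x,y)$. The metric compactification $\overline{X}^d$ is the maximal ideal space of the commutative unital C*-algebra generated by the continuous functions vanishing at infinity on $X$, the constants, and the functions $\varphi_y$ ($y\in X$); the metric boundary is $\partial_d X=\overline{X}^d\setminus X$. Concretely, a sequence $(x_n)$ in $X$ converges to a point of $\partial_d X$ iff it eventually leaves every compact subset of $X$ and $\varphi_y(x_n)$ converges for every $y\in X$; two such sequences converge to the same boundary point iff the limits of $\varphi_z$ along them agree for every $z\in X$. *)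

(* Defs.v *)
From Stdlib Require Import Reals List.
From Coquelicot Require Import Coquelicot.
Open Scope R_scope.

Definition is_metric {X : Type} (d : X -> X -> R) : Prop :=
  (forall x y : X, d x y = 0 <-> x = y) /\
  (forall x y : X, d x y = d y x) /\
  (forall x y z : X, d x z <= d x y + d y z).

Section MetricNotions.
Context {X : Type} (d : X -> X -> R).

Definition m_open (U : X -> Prop) : Prop :=
  forall x, U x -> exists e, 0 < e /\ forall y, d x y < e -> U y.

Definition m_closed (F : X -> Prop) : Prop :=
  m_open (fun x => ~ F x).

Definition m_bounded (B : X -> Prop) : Prop :=
  exists (c : X) (r : R), forall x, B x -> d c x <= r.

Definition m_compact (K : X -> Prop) : Prop :=
  forall (I : Type) (U : I -> X -> Prop),
    (forall i, m_open (U i)) ->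
    (forall x, K x -> exists i, U i x) ->
    exists l : list I, forall x, K x -> exists i, In i l /\ U i x.

Definition m_proper : Prop :=
  forall K : X -> Prop, m_closed K -> m_bounded K -> m_compact K.

Definition m_geodesic : Prop :=
  forall x y : X, exists g : R -> X,
    g 0 = x /\ g (d x y) = y /\
    forall s t, 0 <= s <= d x y -> 0 <= t <= d x y -> d (g s) (g t) = Rabs (s - t).

Variable o : X.

Definition gromov (x y : X) : R := (d x o + d y o - d x y) / 2.

Definition phi (y x : X) : R := d x o - d x y.

Definition leaves_compacts (u : nat -> X) : Prop :=
  forall K : X -> Prop, m_compact K ->
    exists N : nat, forall n, (N <= n)%nat -> ~ K (u n).

(* A point of the metric boundary is determined by the family of limits
   (lim phi_z(x_n))_{z in X}; we represent it by this function w : X -> R. *)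
Definition conv_boundary (u : nat -> X) (w : X -> R) : Prop :=
  leaves_compacts u /\ forall z : X, is_lim_seq (fun n => phi z (u n)) (w z).

End MetricNotions.

(* Main.v *)
Require Import Defs.
From Stdlib Require Import Reals.
From Coquelicot Require Import Coquelicot.
From Stdlib Require Import Lra Lia List Classical ClassicalEpsilon.
Open Scope R_scope.

Lemma fold_max_In (l : list ((nat -> Prop) * nat)) i :
  In i l -> (snd i <= fold_right Nat.max 0%nat (map snd l))%nat.
Proof.
  induction l as [|a l IH]; simpl; [tauto|].
  intros [<-|H]; [lia|]. specialize (IH H). lia.
Qed.

Lemma lim_ev (u : nat -> R) (l : R) (eps : R) :
  0 < eps -> is_lim_seq u l -> exists N, forall n, (N <= n)%nat -> l - eps < u n < l + eps.
Proof.
  intros He H. apply is_lim_seq_spec in H.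
  destruct (H (mkposreal eps He)) as [N HN]. exists N. intros n Hn.
  specialize (HN n Hn). simpl in HN. apply Rabs_def2 in HN. lra.
Qed.

Section S.
Context {X : Type} (d : X -> X -> R) (Hmetric : is_metric d).

Lemma dsym x y : d x y = d y x.
Proof. destruct Hmetric as [_ [H _]]; apply H. Qed.
Lemma dtri x y z : d x z <= d x y + d y z.
Proof. destruct Hmetric as [_ [_ H]]; apply H. Qed.

Lemma cluster (K : X -> Prop) (z : nat -> X) :
  m_compact d K -> (forall n, K (z n)) ->
  exists p, K p /\ forall e N, 0 < e -> exists n, (N <= n)%nat /\ d p (z n) < e.
Proof.
  intros HK Hz.
  destruct (classic (exists p, K p /\ forall e N, 0 < e -> exists n, (N <= n)%nat /\ d p (z n) < e)) as [H|H]; [exact H|].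
  exfalso.
  set (U := fun (i : (X * R) * nat) (x : X) =>
    0 < snd (fst i) /\ (forall n, (snd i <= n)%nat -> snd (fst i) <= d (fst (fst i)) (z n))
    /\ d (fst (fst i)) x < snd (fst i)).
  destruct (HK _ U) as [l Hl].
  - intros [[p e] N] x [He [HN Hx]]. simpl in *.
    exists (e - d p x). split; [lra|]. intros y Hy. unfold U; simpl.
    repeat split; auto. pose proof (dtri p x y). lra.
  - intros x Kx. apply NNPP; intro Hn.
    apply H. exists x. split; auto. intros e N He.
    apply NNPP; intro Hc. apply Hn. exists ((x, e), N). unfold U; simpl.
    repeat split; auto.
    + intros n Hn'. apply Rnot_lt_le. intro. apply Hc. exists n; auto.
    + assert (d x x = 0) by (destruct Hmetric as [Hd _]; apply Hd; auto). lra.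
  - set (M := fold_right Nat.max 0%nat (map snd (map (fun i => (fun _:nat => True, snd i)) l))).
    destruct (Hl (z M) (Hz M)) as [[[p e] N] [Hin [He [HN Hx]]]]. simpl in *.
    assert (HNM : (N <= M)%nat).
    { unfold M. apply (fold_max_In _ (fun _ => True, N)).
      apply in_map_iff. exists (p, e, N). auto. }
    specialize (HN M HNM). lra.
Qed.
End S.

Theorem mainTheorem3 (X : Type) (d : X -> X -> R) (o : X)
  (Hmetric : is_metric d) (Hproper : m_proper d) (Hgeod : m_geodesic d)
  (x y : nat -> X) (w : X -> R)
  (Hx : conv_boundary d o x w) (Hy : conv_boundary d o y w) :
  is_lim_seq (fun n => gromov d o (x n) (y n)) p_infty.
Proof.
  pose proof (dsym d Hmetric) as Hs. pose proof (dtri d Hmetric) as Ht.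
  assert (Hd0 : forall a, d a a = 0) by (destruct Hmetric as [Hd _]; intro; apply Hd; auto).
  assert (Hnn : forall a b, 0 <= d a b) by (intros a b; pose proof (Ht a b a); rewrite Hd0, (Hs b a) in H; lra).
  assert (Hunb : forall t, 0 <= t -> exists p, t - 1 <= w p).
  { intros t Ht0.
    set (K := fun a => d o a <= t).
    assert (HK : m_compact d K).
    { apply Hproper.
      - intros a Ha. unfold K in Ha. apply Rnot_le_lt in Ha. exists (d o a - t). split; [lra|].
        intros b Hb. unfold K. intro Kb. pose proof (Ht o b a). rewrite (Hs b a) in H. lra.
      - exists o, t. auto. }
    destruct Hx as [Hleave Hlim].
    destruct (Hleave K HK) as [N0 HN0].
    destruct (choice (fun n g => g 0 = o /\ g (d o (x n)) = x n /\
        forall s u, 0 <= s <= d o (x n) -> 0 <= u <= d o (x n) -> d (g s) (g u) = Rabs (s - u)))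
      as [G HG].
    { intro n. apply Hgeod. }
    set (z := fun n => if Rle_dec t (d o (x n)) then G n t else o).
    assert (Hz : forall n, K (z n)).
    { intro n. unfold z, K. destruct (Rle_dec t (d o (x n))) as [h|h].
      - destruct (HG n) as [H0 [_ H2]]. rewrite <- H0 at 1.
        pose proof (Hnn o (x n)). rewrite H2 by lra. rewrite Rabs_left1 by lra. lra.
      - rewrite Hd0. lra. }
    assert (Hphi : forall n, (N0 <= n)%nat -> phi d o (z n) (x n) = t).
    { intros n Hn. specialize (HN0 n Hn). unfold K in HN0.
      unfold z. destruct (Rle_dec t (d o (x n))) as [h|h]; [|lra].
      destruct (HG n) as [H0 [H1 H2]]. unfold phi.
      pose proof (Hnn o (x n)). rewrite <- H1 at 2. rewrite Hs. rewrite H2 by lra.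
      rewrite Rabs_right by lra. rewrite Hs. lra. }
    destruct (cluster d Hmetric K z HK Hz) as [p [_ Hp]].
    exists p. apply Rnot_lt_le. intro Hlt.
    destruct (lim_ev _ _ ((t - 1 - w p)/2) ltac:(lra) (Hlim p)) as [N1 HN1].
    destruct (Hp 1 (N0 + N1)%nat ltac:(lra)) as [n [Hn Hdn]].
    specialize (HN1 n ltac:(lia)). specialize (Hphi n ltac:(lia)).
    unfold phi in *. pose proof (Ht (x n) (z n) p). rewrite (Hs (z n) p) in H.
    lra. }
  apply is_lim_seq_spec. intro M.
  destruct (Hunb (Rmax 0 (M + 2))) as [p Hp]; [apply Rmax_l|].
  pose proof (Rmax_r 0 (M+2)).
  destruct (lim_ev _ _ 1 ltac:(lra) (proj2 Hx p)) as [N1 HN1].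
  destruct (lim_ev _ _ 1 ltac:(lra) (proj2 Hy p)) as [N2 HN2].
  exists (N1 + N2)%nat. intros n Hn.
  specialize (HN1 n ltac:(lia)). specialize (HN2 n ltac:(lia)).
  unfold phi, gromov in *. pose proof (Ht (x n) p (y n)). rewrite (Hs p (y n)) in H0.
  lra.
Qed.
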